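(* Let $d\ge2$ and let $L_1,\dots,L_k\subset\mathbb R^d$ be linear subspaces with $\dim L_i\ge2$, $A_i=L_i^\perp$, and assume $L_i\cap L_j\ne\{0\}$ for all $1\le i,j\le k$. Let $\mathcal G_i=\{U\in SO(d): U|_{A_i}=\mathrm{Id}_{A_i}\}$ and let $\mathcal G\subset SO(d)$ be the subgroup generated by $\mathcal G_1,\dots,\mathcal G_k$. Then $\mathcal G$ acts transitively on the unit sphere $\mathbb S^{d-1}$ if and only if $\operatorname{span}\{L_1,\dots,L_k\}=\mathbb R^d$, which in turn is equivalent to $\bigcap_{i=1}^k A_i=\{0\}$. *)

(* Defs.v *)
(* R^d is modelled by row vectors 'rV[R]_d over R : realType;
   linear subspaces are row spaces of square matrices (mxalgebra). *)
From HB Require Import structures.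
From mathcomp Require Import all_boot all_order all_algebra.
From mathcomp Require Import reals.
Set Implicit Arguments. Unset Strict Implicit. Unset Printing Implicit Defensive.
Import Order.TTheory GRing.Theory Num.Theory.
Local Open Scope ring_scope.

Section Defs.
Variables (R : realType) (d : nat).

Definition orth_compl (L : 'M[R]_d) : 'M[R]_d := kermx L^T.

Definition SOd (U : 'M[R]_d) : Prop := U *m U^T = 1%:M /\ \det U = 1.

Definition fixes_pointwise (A U : 'M[R]_d) : Prop :=
  forall v : 'rV[R]_d, (v <= A)%MS -> v *m U = v.

Definition rot_fixing (A U : 'M[R]_d) : Prop := SOd U /\ fixes_pointwise A U.

Inductive gen_group (P : 'M[R]_d -> Prop) : 'M[R]_d -> Prop :=
  | gen_one : gen_group P 1%:M
  | gen_base g : P g -> gen_group P g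
  | gen_mul g h : gen_group P g -> gen_group P h -> gen_group P (g *m h)
  | gen_inv g : gen_group P g -> gen_group P (invmx g).

Definition unit_sphere (v : 'rV[R]_d) : Prop := (v *m v^T) 0 0 = 1.

Definition transitive_on_sphere (G : 'M[R]_d -> Prop) : Prop :=
  forall x y : 'rV[R]_d, unit_sphere x -> unit_sphere y ->
    exists U, G U /\ x *m U = y.

End Defs.

(* Main.v *)
Require Import Defs.
From HB Require Import structures.
From mathcomp Require Import all_boot all_order all_algebra.
From mathcomp Require Import reals.
From mathcomp Require Import ring lra zify.
Set Implicit Arguments. Unset Strict Implicit. Unset Printing Implicit Defensive.
Import Order.TTheory GRing.Theory Num.Theory.
Local Open Scope ring_scope.


Section Vec.
Variables (R : realType) (d : nat).
Implicit Types (u v w a b : 'rV[R]_d).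

Definition dot u v : R := (u *m v^T) 0 0.

Lemma dotE u v : dot u v = \sum_j u 0 j * v 0 j.
Proof. by rewrite /dot mxE; apply: eq_bigr => j _; rewrite mxE. Qed.

Lemma dotC u v : dot u v = dot v u.
Proof. by rewrite !dotE; apply: eq_bigr => j _; rewrite mulrC. Qed.

Lemma dotDl u v w : dot (u + v) w = dot u w + dot v w.
Proof. by rewrite /dot mulmxDl !mxE. Qed.
Lemma dotBl u v w : dot (u - v) w = dot u w - dot v w.
Proof. by rewrite /dot mulmxBl !mxE. Qed.
Lemma dotZl (k : R) u w : dot (k *: u) w = k * dot u w.
Proof. by rewrite /dot -scalemxAl !mxE. Qed.
Lemma dotDr u v w : dot w (u + v) = dot w u + dot w v.
Proof. by rewrite dotC dotDl !(dotC w). Qed.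
Lemma dotBr u v w : dot w (u - v) = dot w u - dot w v.
Proof. by rewrite dotC dotBl !(dotC w). Qed.
Lemma dotZr (k : R) u w : dot w (k *: u) = k * dot w u.
Proof. by rewrite dotC dotZl (dotC w). Qed.
Lemma dot0l u : dot 0 u = 0.
Proof. by rewrite /dot mul0mx mxE. Qed.

Lemma dotNl u w : dot (- u) w = - dot u w.
Proof. by rewrite /dot mulNmx !mxE. Qed.
Lemma dotNr u w : dot w (- u) = - dot w u.
Proof. by rewrite dotC dotNl dotC. Qed.

Lemma dot_ge0 u : 0 <= dot u u.
Proof. by rewrite dotE; apply: sumr_ge0 => j _; rewrite -expr2 sqr_ge0. Qed.

Lemma dot_eq0 u : dot u u = 0 -> u = 0.
Proof.
rewrite dotE => /eqP; rewrite psumr_eq0 => [/allP H|j _]; last by rewrite -expr2 sqr_ge0.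
apply/rowP => j; rewrite mxE.
have := H j (mem_index_enum j); rewrite -expr2 sqrf_eq0 => /eqP //.
Qed.

Lemma dot_gt0 u : u != 0 -> 0 < dot u u.
Proof.
move=> nz; rewrite lt_def dot_ge0 andbT; apply/eqP => /dot_eq0 h.
by rewrite h eqxx in nz.
Qed.

Definition refl a : 'M[R]_d := 1%:M - (2 / dot a a) *: (a^T *m a).

Lemma refl_vec u a : u *m refl a = u - (2 * dot u a / dot a a) *: a.
Proof.
rewrite /refl mulmxBr mulmx1 -scalemxAr mulmxA.
rewrite [u *m a^T]mx11_scalar mul_scalar_mx scalerA.
by rewrite /dot mulrAC.
Qed.

Lemma refl_tr a : (refl a)^T = refl a.
Proof. by rewrite /refl linearB /= trmx1 linearZ /= trmx_mul trmxK. Qed.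

Lemma mx_eq_vec (A B : 'M[R]_d) : (forall u : 'rV[R]_d, u *m A = u *m B) -> A = B.
Proof.
move=> H; apply/row_matrixP => i.
have E (C : 'M[R]_d) : row i C = row i 1%:M *m C by rewrite -row_mul mul1mx.
by rewrite (E A) (E B) H.
Qed.

Lemma refl_invol a : a != 0 -> refl a *m refl a = 1%:M.
Proof.
move=> nz; have p := dot_gt0 nz.
apply: mx_eq_vec => u; rewrite mulmx1 mulmxA !refl_vec.
rewrite dotBl dotZl.
apply/rowP => j; rewrite !mxE; field.
by rewrite gt_eqF.
Qed.

Lemma refl_orth a b : a != 0 -> b != 0 ->
  (refl a *m refl b) *m (refl a *m refl b)^T = 1%:M.
Proof.
move=> na nb; rewrite trmx_mul !refl_tr.
by rewrite mulmxA -(mulmxA (refl a)) refl_invol // mulmx1 refl_invol.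
Qed.

Lemma det_rank1 (u : 'cV[R]_d) (b : 'rV[R]_d) :
  \det (1%:M - u *m b) = 1 - (b *m u) 0 0.
Proof.
pose M := block_mx (1%:M : 'M[R]_1) b u 1%:M.
have E1 : M = block_mx 1%:M 0 u 1%:M *m block_mx 1%:M b 0 (1%:M - u *m b).
  rewrite mulmx_block !mul1mx !mulmx1 !mul0mx !addr0.
  by rewrite addrC subrK.
have E2 : M = block_mx (1%:M - b *m u) b 0 1%:M *m block_mx 1%:M 0 u 1%:M.
  by rewrite mulmx_block !mul1mx !mulmx1 !mul0mx ?mulmx0 ?addr0 ?add0r subrK.
have h1 : \det M = \det (1%:M - u *m b).
  by rewrite E1 det_mulmx det_lblock det_ublock !det1 !mul1r.
have h2 : \det M = \det ((1%:M : 'M[R]_1) - b *m u).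
  by rewrite E2 det_mulmx det_lblock det_ublock !det1 !mulr1.
rewrite -h1 h2 det_mx11 !mxE eqxx /=.
by rewrite mulr1n.
Qed.

Lemma det_refl a : a != 0 -> \det (refl a) = -1.
Proof.
move=> nz; have p := dot_gt0 nz.
rewrite /refl scalemxAl det_rank1 -scalemxAr mxE.
rewrite -/(dot a a); field; lra.
Qed.

Lemma refl_nz a b : a != 0 -> b != 0 -> b *m refl a != 0.
Proof.
move=> na nb; apply/eqP => h; move/eqP: nb; apply.
by rewrite -(mulmx1 b) -(refl_invol na) mulmxA h mul0mx.
Qed.

Lemma refl_dot a u v : a != 0 -> dot (u *m refl a) (v *m refl a) = dot u v.
Proof.
move=> na; rewrite /dot trmx_mul refl_tr mulmxA -(mulmxA u) refl_invol //.
by rewrite mulmx1.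
Qed.

Lemma refl_conj a b : a != 0 -> b != 0 ->
  refl (b *m refl a) = refl a *m refl b *m refl a.
Proof.
move=> na nb; have pa := dot_gt0 na; have pb := dot_gt0 nb.
apply: mx_eq_vec => u; rewrite (refl_vec u (b *m refl a)) refl_dot //.
rewrite !mulmxA !refl_vec.
rewrite !(dotBl, dotBr, dotZl, dotZr, dotDl, dotDr, dotNl, dotNr).
rewrite ?(dotC b a) ?(dotC a u) ?(dotC b u) .
apply/rowP => j; rewrite !mxE; field.
by rewrite !gt_eqF.
Qed.

Lemma refl_between u w : dot u u = dot w w -> u != w -> w *m refl (u - w) = u.
Proof.
move=> e nz; have nz' : u - w != 0 by rewrite subr_eq0.
have p := dot_gt0 nz'.
rewrite refl_vec.
have e2 : dot (u - w) (u - w) = - (2 * dot w (u - w)).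
  by rewrite !(dotBl,dotBr) (dotC w u) e; ring.
have -> : 2 * dot w (u - w) / dot (u - w) (u - w) = -1.
  rewrite e2 in p *; have nz2 : 2 * dot w (u - w) != 0.
    by apply/eqP => h; rewrite h in p; lra.
  field; apply/eqP => h; rewrite h in p; lra.
by rewrite scaleNr scale1r opprK addrC subrK.
Qed.

End Vec.


Section Abs.
Variables (R : realType) (d : nat) (D : 'rV[R]_d -> Prop).
Hypothesis D0 : forall v, D v -> v != 0.
Hypothesis Dref : forall a b, D a -> D b -> D (b *m refl a).

Definition planeD (e f : 'rV[R]_d) :=
  forall x y : R, x *: e + y *: f != 0 -> D (x *: e + y *: f).

Lemma reach w u : D w -> dot u u = dot w w -> (u - w != 0 -> D (u - w)) -> D u.
Proof.
move=> Dw e H; have [->//|ne] := eqVneq u w.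
rewrite -(refl_between e ne); apply: Dref => //; apply: H.
by rewrite subr_eq0.
Qed.

Definition phi (e f h : 'rV[R]_d) (x y z : R) := x *: e + y *: f + z *: h.

Lemma dot_phi e f h x y z x' y' z' :
  dot e e = 1 -> dot f f = 1 -> dot h h = 1 -> dot e f = 0 -> dot e h = 0 -> dot f h = 0 ->
  dot (phi e f h x y z) (phi e f h x' y' z') = x * x' + y * y' + z * z'.
Proof.
move=> ee ff hh ef eh fh; rewrite /phi !(dotDl, dotDr, dotZl, dotZr).
rewrite (dotC f e) (dotC h e) (dotC h f) ee ff hh ef eh fh; ring.
Qed.

Lemma nz_of_dot (v : 'rV[R]_d) : 0 < dot v v -> v != 0.
Proof. by move=> p; apply/eqP => h; move: p; rewrite h dot0l ltxx. Qed.

Lemma base3 e f h g c s :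
  dot e e = 1 -> dot f f = 1 -> dot h h = 1 -> dot e f = 0 -> dot e h = 0 -> dot f h = 0 ->
  0 < s -> c ^+ 2 <= s ^+ 2 -> g = c *: f + s *: h -> planeD e f -> planeD e g ->
  forall x Y Z, phi e f h x Y Z != 0 -> D (phi e f h x Y Z).
Proof.
move=> ee ff hh ef eh fh s0 cs hg Pf Pg x Y Z nz.
have dp := dot_phi _ _ _ _ _ _ ee ff hh ef eh fh.
pose r2 := x ^+ 2 + Y ^+ 2 + Z ^+ 2; pose rho2 := x ^+ 2 + Y ^+ 2.
pose t := c / s * Z.
have r2p : 0 < r2 by have := dot_gt0 nz; rewrite dp /r2 !expr2.
have tZ : t ^+ 2 <= Z ^+ 2.
  rewrite /t exprMn expr_div_n.
  have s2 : 0 < s ^+ 2 by rewrite exprn_gt0.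
  rewrite -[leRHS]mul1r ler_wpM2r ?sqr_ge0 // ler_pdivrMr //; lra.
suff step : forall y1, y1 ^+ 2 <= rho2 -> (y1 - t) ^+ 2 <= r2 -> D (phi e f h x Y Z).
  have [tr|tr] := lerP (t ^+ 2) rho2.
    by apply: (step t) => //; rewrite subrr expr0n /=; lra.
  have rho0 : 0 <= rho2 by rewrite /rho2; have := sqr_ge0 x; have := sqr_ge0 Y; lra.
  pose rho := Num.sqrt rho2.
  have rr : rho ^+ 2 = rho2 by rewrite sqr_sqrtr.
  have rg : 0 <= rho by rewrite sqrtr_ge0.
  have [tp|tn] := lerP 0 t.
    apply: (step rho); first by rewrite rr.
    have : rho < t by rewrite -(ltr_pXn2r (_ : 0 < 2)%N) ?nnegrE // rr.
    move=> rt; rewrite /r2; nra.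
  apply: (step (- rho)); first by rewrite sqrrN rr.
  have : rho < - t.
    by rewrite -(ltr_pXn2r (_ : 0 < 2)%N) ?nnegrE ?sqrrN ?rr //; lra.
  move=> rt; rewrite /r2; nra.
move=> y1 h1 h2.
pose x1 := Num.sqrt (rho2 - y1 ^+ 2).
pose y2 := y1 - t.
pose x2 := Num.sqrt (r2 - y2 ^+ 2).
have x1s : x1 ^+ 2 = rho2 - y1 ^+ 2 by rewrite sqr_sqrtr // subr_ge0.
have x2s : x2 ^+ 2 = r2 - y2 ^+ 2 by rewrite sqr_sqrtr // subr_ge0.
have Dw2 : D (phi e f h x2 y2 0).
  have nz2 : phi e f h x2 y2 0 != 0.
    apply: nz_of_dot; rewrite dp; rewrite !mulr0 addr0 -!expr2 x2s; lra.
  have E : phi e f h x2 y2 0 = x2 *: e + y2 *: f by rewrite /phi scale0r addr0.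
  by rewrite E in nz2 *; apply: Pf.
have Dw1 : D (phi e f h x1 y1 Z).
  apply: (reach Dw2); first by rewrite !dp -!expr2 x1s x2s /r2 /rho2; lra.
  have -> : phi e f h x1 y1 Z - phi e f h x2 y2 0 = (x1 - x2) *: e + (Z / s) *: g.
    rewrite hg /phi /y2 /t; apply/rowP => j; rewrite !mxE; field; lra.
  exact: Pg.
apply: (reach Dw1); first by rewrite !dp -!expr2 x1s /r2 /rho2; lra.
have -> : phi e f h x Y Z - phi e f h x1 y1 Z = (x - x1) *: e + (Y - y1) *: f.
  rewrite /phi; apply/rowP => j; rewrite !mxE; ring.
exact: Pf.
Qed.


Lemma L3base e f g :
  dot e e = 1 -> dot f f = 1 -> dot g g = 1 -> dot e f = 0 -> dot e g = 0 ->
  (dot f g) ^+ 2 <= 1 / 4 -> planeD e f -> planeD e g ->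
  forall x y z, x *: e + y *: f + z *: g != 0 -> D (x *: e + y *: f + z *: g).
Proof.
move=> ee ff gg ef eg c14 Pf Pg x y z nz.
set c := dot f g in c14.
have c2 : 0 <= c ^+ 2 by rewrite sqr_ge0.
pose s := Num.sqrt (1 - c ^+ 2).
have ss : s ^+ 2 = 1 - c ^+ 2 by rewrite sqr_sqrtr //; lra.
have s0 : 0 < s by rewrite sqrtr_gt0; lra.
pose h := s^-1 *: (g - c *: f).
have hg : g = c *: f + s *: h.
  by rewrite /h scalerA divff ?gt_eqF // scale1r addrC subrK.
have fh : dot f h = 0.
  by rewrite /h dotZr dotBr dotZr ff -/c mulr1 subrr mulr0.
have eh : dot e h = 0.
  by rewrite /h dotZr dotBr dotZr eg ef mulr0 subrr mulr0.
have hh : dot h h = 1.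
  rewrite /h dotZl !dotZr !(dotBl, dotBr, dotZl, dotZr) gg ff (dotC g f) -/c.
  have sn : s != 0 by rewrite gt_eqF.
  have ss' : s * s = 1 - c ^+ 2 by rewrite -expr2.
  rewrite mulrA -invfM.
  have -> : 1 - c * c - c * (c - c * 1) = s * s by rewrite ss'; ring.
  by rewrite mulVf // mulf_neq0.
have E : x *: e + y *: f + z *: g = phi e f h x (y + z * c) (z * s).
  rewrite hg /phi; apply/rowP => j; rewrite !mxE; ring.
rewrite E in nz *; apply: (base3 ee ff hh ef eh fh s0 _ hg Pf Pg nz).
rewrite ss; lra.
Qed.

Lemma L3 n : forall e f g,
  dot e e = 1 -> dot f f = 1 -> dot g g = 1 -> dot e f = 0 -> dot e g = 0 ->
  1 / 2 <= (1 - `|dot f g|) * 2 ^+ n -> planeD e f -> planeD e g ->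
  forall x y z, x *: e + y *: f + z *: g != 0 -> D (x *: e + y *: f + z *: g).
Proof.
elim: n => [|n IH] e f g ee ff gg ef eg hc Pf Pg.
  apply: L3base => //; move: hc; rewrite expr0 mulr1 => hc.
  rewrite -(real_normK (num_real _)); have := normr_ge0 (dot f g); nra.
set c := dot f g in hc *.
have [c14|c14] := lerP (c ^+ 2) (1/4); first exact: L3base.
have cn : c != 0 by apply/eqP => h; rewrite h expr0n /= in c14; lra.
have fnz : f != 0 by apply: nz_of_dot; rewrite ff; lra.
have Df : D f.
  have E : f = 0 *: e + 1 *: f by rewrite scale0r add0r scale1r.
  by rewrite E; apply: Pf; rewrite -E.
pose g' := g - (2 * c) *: f.
have Pg' : planeD e g'.
  move=> x y nz.
  have E : x *: e + y *: g' = (x *: e + y *: g) *m refl f.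
    rewrite refl_vec !(dotDl, dotZl) ef (dotC g f) -/c ff.
    rewrite /g'; apply/rowP => j; rewrite !mxE; field => //.
  rewrite E in nz *; apply: Dref => //; apply: Pg.
  by apply/eqP => h; move: nz; rewrite h mul0mx eqxx.
have g'g' : dot g' g' = 1.
  rewrite /g' !(dotBl, dotBr, dotZl, dotZr) gg ff (dotC g f) -/c; ring.
have eg' : dot e g' = 0 by rewrite /g' dotBr dotZr eg ef mulr0 subrr.
have gg' : dot g g' = 1 - 2 * c ^+ 2.
  by rewrite /g' dotBr dotZr gg (dotC g f) -/c; ring.
have IH' := IH e g g' ee gg g'g' eg eg'.
move=> x y z nz.
have E : x *: e + y *: f + z *: g = x *: e + (z + y / (2 * c)) *: g + (- (y / (2 * c))) *: g'.
  rewrite /g'; apply/rowP => j; rewrite !mxE; field => //.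
rewrite E in nz *; apply: IH' => //.
rewrite gg'.
have P1 : 1 <= (2 : R) ^+ n by rewrite exprn_ege1 //; lra.
move: hc; rewrite exprS.
have ca := normr_ge0 c.
have c2 : c ^+ 2 = `|c| ^+ 2 by rewrite (real_normK (num_real _)).
rewrite c2 in c14 *; move=> hc.
have [h0|h0] := lerP 0 (1 - 2 * `|c| ^+ 2).
  rewrite (ger0_norm h0); nra.
rewrite (ltr0_norm h0); nra.
Qed.


Definition DC (X : 'M[R]_d) := forall v : 'rV[R]_d, (v <= X)%MS -> v != 0 -> D v.

Lemma DC_sub X Y : (Y <= X)%MS -> DC X -> DC Y.
Proof. by move=> YX H v vY; apply: H; apply: submx_trans YX. Qed.

Lemma normalize (u : 'rV[R]_d) : u != 0 ->
  exists2 k : R, 0 < k & dot (k^-1 *: u) (k^-1 *: u) = 1.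
Proof.
move=> nz; have p := dot_gt0 nz.
exists (Num.sqrt (dot u u)); first by rewrite sqrtr_gt0.
rewrite dotZl dotZr mulrA -invfM -expr2 sqr_sqrtr ?mulVf ?gt_eqF //; lra.
Qed.

Lemma subB_sub (A B : 'rV[R]_d) (X : 'M[R]_d) : (A <= X)%MS -> (B <= X)%MS -> (A - B <= X)%MS.
Proof. by move=> a b; rewrite -scaleN1r; apply: addmx_sub => //; apply: scalemx_sub. Qed.

Lemma exists_pow (c : R) : `|c| < 1 -> exists n, 1 / 2 <= (1 - `|c|) * 2 ^+ n.
Proof.
move=> c1; have p : 0 < 1 - `|c| by lra.
pose N := Num.Def.archi_bound ((1 - `|c|)^-1).
have hN : (1 - `|c|)^-1 < N%:R by apply: archi_boundP; rewrite invr_ge0; lra.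
exists N.
have h2 : (N%:R : R) <= 2 ^+ N.
  rewrite -natrX ler_nat; apply: ltnW; exact: ltn_expl.
have : 1 < (1 - `|c|) * N%:R.
  by rewrite -(ltr_pM2l p) mulfV ?gt_eqF // in hN.
move=> h; have : (1 - `|c|) * N%:R <= (1 - `|c|) * 2 ^+ N by rewrite ler_pM2l.
lra.
Qed.

Lemma mergeDC X Y (e : 'rV[R]_d) : e != 0 -> (e <= X)%MS -> (e <= Y)%MS -> DC X -> DC Y -> DC (X + Y)%MS.
Proof.
move=> enz eX eY DX DY v /sub_addsmxP [[p q] /= ->] nz.
set x := p *m X in nz *; set y := q *m Y in nz *.
have hx : (x <= X)%MS by apply: submxMl.
have hy : (y <= Y)%MS by apply: submxMl.
have [ke ke0 e1e1] := normalize enz; set e1 := ke^-1 *: e in e1e1.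
have e1X : (e1 <= X)%MS by apply: scalemx_sub.
have e1Y : (e1 <= Y)%MS by apply: scalemx_sub.
set x' := x - dot x e1 *: e1.
set y' := y - dot y e1 *: e1.
have x'X : (x' <= X)%MS by apply: subB_sub => //; apply: scalemx_sub.
have y'Y : (y' <= Y)%MS by apply: subB_sub => //; apply: scalemx_sub.
have Ex : x = dot x e1 *: e1 + x' by rewrite /x' addrC subrK.
have Ey : y = dot y e1 *: e1 + y' by rewrite /y' addrC subrK.
have [x'0|x'n] := eqVneq x' 0.
  apply: DY => //; rewrite Ex x'0 addr0; apply: addmx_sub => //; exact: scalemx_sub.
have [y'0|y'n] := eqVneq y' 0.
  apply: DX => //; rewrite Ey y'0 addr0; apply: addmx_sub => //; exact: scalemx_sub.
have [kx kx0 ff] := normalize x'n; set f := kx^-1 *: x' in ff.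
have [ky ky0 gg] := normalize y'n; set g := ky^-1 *: y' in gg.
have Ex' : x' = kx *: f by rewrite /f scalerA divff ?gt_eqF // scale1r.
have Ey' : y' = ky *: g by rewrite /g scalerA divff ?gt_eqF // scale1r.
have e1x' : dot e1 x' = 0 by rewrite /x' dotBr dotZr e1e1 mulr1 (dotC e1 x) subrr.
have e1y' : dot e1 y' = 0 by rewrite /y' dotBr dotZr e1e1 mulr1 (dotC e1 y) subrr.
have ef : dot e1 f = 0 by rewrite /f dotZr e1x' mulr0.
have eg : dot e1 g = 0 by rewrite /g dotZr e1y' mulr0.
have fX : (f <= X)%MS by apply: scalemx_sub.
have gY : (g <= Y)%MS by apply: scalemx_sub.
clearbody f g.
set c := dot f g.
have cc : dot (f - c *: g) (f - c *: g) = 1 - c ^+ 2.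
  rewrite !(dotBl, dotBr, dotZl, dotZr) ff gg (dotC g f) -/c; ring.
have c1 : c ^+ 2 <= 1 by have := dot_ge0 (f - c *: g); lra.
have [c1'|c1'] := eqVneq (c ^+ 2) 1.
  have fg : f = c *: g.
    by apply/eqP; rewrite -subr_eq0; apply/eqP/dot_eq0; rewrite cc c1' subrr.
  apply: DY => //; rewrite Ex Ex' fg scalerA -addrA; apply: addmx_sub.
    exact: scalemx_sub.
  by apply: addmx_sub => //; exact: scalemx_sub.
have cl : `|c| < 1.
  have c1s : c ^+ 2 < 1 by rewrite lt_neqAle c1' c1.
  rewrite -(real_normK (num_real _)) in c1s.
  have := normr_ge0 c; nra.
have [n hn] := exists_pow cl.
have Pf : planeD e1 f.
  move=> a b nzab; apply: DX => //; apply: addmx_sub; exact: scalemx_sub.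
have Pg : planeD e1 g.
  move=> a b nzab; apply: DY => //; apply: addmx_sub; exact: scalemx_sub.
have E : x + y = (dot x e1 + dot y e1) *: e1 + kx *: f + ky *: g.
  rewrite {1}Ex {1}Ey Ex' Ey'; apply/rowP => j; rewrite !mxE; ring.
rewrite E in nz *.
exact: (L3 e1e1 ff gg ef eg hn Pf Pg nz).
Qed.

End Abs.


Section Conc.
Variables (R : realType) (d : nat).

Lemma nzrow m (A : 'M[R]_(m, d)) : (0 < \rank A)%N ->
  exists v : 'rV[R]_d, v != 0 /\ (v <= A)%MS.
Proof.
move=> r; have [i Hi] : exists i, row i A != 0.
  apply/existsP; apply: contraLR r; rewrite negb_exists => /forallP H.
  have -> : A = 0 by apply/row_matrixP => i; rewrite row0; apply/eqP; move: (H i); rewrite negbK.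
  by rewrite mxrank0.
by exists (row i A); split => //; apply: row_sub.
Qed.

Lemma orth_of (L : 'M[R]_d) (v a : 'rV[R]_d) :
  (v <= orth_compl L)%MS -> (a <= L)%MS -> dot v a = 0.
Proof.
rewrite /orth_compl sub_kermx => /eqP vL /submxP [w ->].
by rewrite /dot trmx_mul mulmxA vL mul0mx mxE.
Qed.

Lemma refl_fix (v a : 'rV[R]_d) : dot v a = 0 -> v *m refl a = v.
Proof. by move=> h; rewrite refl_vec h mulr0 mul0r scale0r subr0. Qed.

Lemma rot_pair (L : 'M[R]_d) (a b : 'rV[R]_d) : a != 0 -> b != 0 ->
  (a <= L)%MS -> (b <= L)%MS -> rot_fixing (orth_compl L) (refl a *m refl b).
Proof.
move=> na nb aL bL; split; first split.
- exact: refl_orth.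
- by rewrite det_mulmx !det_refl // mulrNN mulr1.
move=> v vA; rewrite mulmxA !refl_fix //; exact: orth_of vA _.
Qed.

Lemma mulmx_reflK (A : 'M[R]_d) (c : 'rV[R]_d) : c != 0 -> A *m refl c *m refl c = A.
Proof. by move=> nc; rewrite -mulmxA refl_invol // mulmx1. Qed.

Lemma perp_vec (L : 'M[R]_d) (y : 'rV[R]_d) : (2 <= \rank L)%N ->
  exists c : 'rV[R]_d, [/\ c != 0, (c <= L)%MS & dot y c = 0].
Proof.
move=> r2.
have nsub : ~~ (kermx (L *m y^T) <= kermx L)%MS.
  apply/negP => /mxrankS; rewrite !mxrank_ker.
  have := rank_leq_col (L *m y^T); have := rank_leq_col L; lia.
have [i Hi] : exists i, ~~ (row i (kermx (L *m y^T)) <= kermx L)%MS.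
  apply/existsP; apply: contraR nsub; rewrite negb_exists => /forallP H.
  by apply/row_subP => i; move: (H i); rewrite negbK.
set u := row i _ in Hi.
have uK : u *m (L *m y^T) = 0 by apply/eqP; rewrite -sub_kermx row_sub.
exists (u *m L); split.
- by apply: contra Hi => /eqP h; rewrite sub_kermx h.
- exact: submxMl.
- by rewrite dotC /dot -mulmxA uK mxE.
Qed.

End Conc.

Lemma fixG (R : realType) (d k : nat) (L : 'I_k -> 'M[R]_d) (x : 'rV[R]_d) :
  (forall i, (x <= orth_compl (L i))%MS) ->
  forall U, gen_group (fun U => exists i : 'I_k, rot_fixing (orth_compl (L i)) U) U ->
  x *m U = x.
Proof.
move=> xo U; elim => [|g [i [_ fp]]|g h _ IHg _ IHh|g _ IH].
- by rewrite mulmx1.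
- exact: fp.
- by rewrite mulmxA IHg IHh.
- have [u|nu] := boolP (g \in unitmx).
    by rewrite -{1}IH mulmxK.
  by rewrite invmx_out ?inE.
Qed.

Lemma notfull (R : realType) (d k : nat) (L : 'I_k -> 'M[R]_d) :
  ~~ (1%:M <= \sum_(i < k) L i)%MS ->
  exists v : 'rV[R]_d, v != 0 /\ forall i, (v <= orth_compl (L i))%MS.
Proof.
set S := (\sum_(i < k) L i)%MS => nf.
have rS : (\rank S < d)%N.
  rewrite sub1mx /row_full in nf; have := rank_leq_col S; move: nf; case: eqP => //; lia.
have [v [nz vK]] : exists v : 'rV[R]_d, v != 0 /\ (v <= kermx S^T)%MS.
  by apply: nzrow; rewrite mxrank_ker mxrank_tr; lia.
exists v; split => // i.
have /submxP [M ->] : (L i <= S)%MS by apply: (sumsmx_sup i).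
rewrite /orth_compl sub_kermx trmx_mul mulmxA.
by rewrite sub_kermx in vK; rewrite (eqP vK) mul0mx.
Qed.

Unset Implicit Arguments.

Theorem proposition1p5 (R : realType) (d k : nat) (L : 'I_k -> 'M[R]_d) :
  (2 <= d)%N ->
  (forall i, (2 <= \rank (L i))%N) ->
  (forall i j, (0 < \rank (L i :&: L j)%MS)%N) ->
  let G := gen_group (fun U => exists i : 'I_k, rot_fixing (orth_compl (L i)) U) in
  (transitive_on_sphere G <-> (\sum_(i < k) L i :=: (1%:M : 'M[R]_d))%MS) /\
  ((\sum_(i < k) L i :=: (1%:M : 'M[R]_d))%MS <-> (\bigcap_(i < k) orth_compl (L i) == (0 : 'M[R]_d))%MS).
Proof.
move=> d2 rk cap G.
set S := (\sum_(i < k) L i)%MS.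
have fullE : (S :=: 1%:M)%MS <-> (1%:M <= S)%MS.
  split; first by move/eqmxP/andP => [].
  by move=> h; apply/eqmxP; rewrite submx1 h.
split; last first.
  rewrite fullE; split.
    move=> full; rewrite sub0mx andbT; apply/row_subP => i.
    set v := row i _.
    have vo : forall j, (v <= orth_compl (L j))%MS.
      by move=> j; apply: submx_trans (row_sub i _) _; apply: (bigcapmx_inf j).
    have : (S <= kermx v^T)%MS.
      apply/sumsmx_subP => j _; rewrite sub_kermx.
      by move: (vo j); rewrite /orth_compl sub_kermx => /eqP h; rewrite -(trmxK (L j)) -trmx_mul h trmx0.
    move=> /(submx_trans full); rewrite sub_kermx mul1mx => /eqP h.
    by rewrite -(trmxK v) h trmx0 sub0mx.
  move=> /andP [c0 _]; apply/negPn/negP => /notfull [v [nz vo]].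
  have : (v <= \bigcap_(i < k) orth_compl (L i))%MS by apply/sub_bigcapmxP => i _; exact: vo.
  by move/submx_trans/(_ c0); rewrite submx0 (negbTE nz).
rewrite fullE; split.
  move=> tr; apply/negPn/negP => /notfull [v [nz vo]].
  have [kv kv0 xx] := normalize nz; set x := kv^-1 *: v in xx.
  have xo : forall i, (x <= orth_compl (L i))%MS by move=> i; apply: scalemx_sub.
  have yy : dot (- x) (- x) = 1 by rewrite dotNl dotNr opprK.
  have [U [GU xU]] := tr x (- x) xx yy.
  rewrite (fixG xo GU) in xU.
  have h1 : dot x (- x) = 1 by rewrite -xU.
  by rewrite dotNr xx in h1; lra.
move=> full.
have [k0|kpos] := posnP k.
  exfalso; move: full; rewrite /S; move: L rk cap G S fullE; rewrite k0 => L' _ _ _ _ _.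
  rewrite big_ord0 submx0 => /eqP /matrixP /(_ (Ordinal (ltn_trans (ltnSn 0) d2)) (Ordinal (ltn_trans (ltnSn 0) d2))).
  by rewrite !mxE eqxx /= => /eqP; rewrite oner_eq0.
pose i0 : 'I_k := Ordinal kpos.
pose D (v : 'rV[R]_d) := v != 0 /\ forall i (c0 : 'rV[R]_d), c0 != 0 -> (c0 <= L i)%MS ->
  G (refl v *m refl c0) /\ G (refl c0 *m refl v).
have D0 : forall v, D v -> v != 0 by move=> v [].
have Gp : forall i (a b : 'rV[R]_d), a != 0 -> b != 0 -> (a <= L i)%MS -> (b <= L i)%MS ->
    G (refl a *m refl b).
  by move=> i a b na nb aL bL; apply: gen_base; exists i; apply: rot_pair.
have DL : forall j (a : 'rV[R]_d), a != 0 -> (a <= L j)%MS -> D a.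
  move=> j a na aL; split => // i c0 nc cL.
  have [e [ne]] := nzrow (cap j i); rewrite sub_capmx => /andP [ej ei].
  split.
    have -> : refl a *m refl c0 = (refl a *m refl e) *m (refl e *m refl c0).
      by rewrite mulmxA mulmx_reflK.
    by apply: gen_mul; [apply: (Gp j) | apply: (Gp i)].
  have -> : refl c0 *m refl a = (refl c0 *m refl e) *m (refl e *m refl a).
    by rewrite mulmxA mulmx_reflK.
  by apply: gen_mul; [apply: (Gp i) | apply: (Gp j)].
have Dref : forall a b, D a -> D b -> D (b *m refl a).
  move=> a b [na Ha] [nb Hb]; split; first exact: refl_nz.
  move=> i c0 nc cL; rewrite refl_conj //.
  have [Ha1 Ha2] := Ha i c0 nc cL; have [Hb1 Hb2] := Hb i c0 nc cL.
  split.
    have -> : refl a *m refl b *m refl a *m refl c0 =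
      (refl a *m refl c0) *m ((refl c0 *m refl b) *m (refl a *m refl c0)).
      by rewrite !mulmxA mulmx_reflK.
    by apply: gen_mul => //; apply: gen_mul.
  have -> : refl c0 *m (refl a *m refl b *m refl a) =
    (refl c0 *m refl a) *m ((refl b *m refl c0) *m (refl c0 *m refl a)).
    by rewrite !mulmxA mulmx_reflK.
  by apply: gen_mul => //; apply: gen_mul.
have DCL : forall j, DC D (L j) by move=> j v vL nz; exact: DL j v nz vL.
have [e0 [ne0 e0L]] := nzrow (cap i0 i0).
rewrite sub_capmx in e0L; case/andP: e0L => e0L _.
have DCS : DC D (S + L i0)%MS.
  rewrite /S; apply: (big_ind (fun X => DC D (X + L i0)%MS)).
  - apply: DC_sub (DCL i0); by rewrite addsmx_sub sub0mx submx_refl.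
  - move=> X Y hX hY.
    have := mergeDC Dref ne0 (submx_trans e0L (addsmxSr X _)) (submx_trans e0L (addsmxSr Y _)) hX hY.
    apply: DC_sub; rewrite !addsmx_sub; apply/andP; split; [apply/andP; split|].
    + exact: submx_trans (addsmxSl X (L i0)) (addsmxSl _ _).
    + exact: submx_trans (addsmxSl Y (L i0)) (addsmxSr _ _).
    + exact: submx_trans (addsmxSr X (L i0)) (addsmxSl _ _).
  - move=> i _.
    have [e [ne]] := nzrow (cap i i0); rewrite sub_capmx => /andP [ei ei0].
    have := mergeDC Dref ne ei ei0 (DCL i) (DCL i0); apply.
have Dall : forall v : 'rV[R]_d, v != 0 -> D v.
  move=> v nz; apply: DCS nz; apply: submx_trans (submx1 v) _.
  exact: submx_trans full (addsmxSl _ _).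
move=> x y xx yy.
have [->|nxy] := eqVneq x y.
  by exists 1%:M; split; [apply: gen_one | rewrite mulmx1].
have [c [nc cL yc]] := perp_vec y (rk i0).
have na : y - x != 0 by rewrite subr_eq0 eq_sym.
have [_ H] := Dall _ na.
have [H1 _] := H i0 c nc cL.
exists (refl (y - x) *m refl c); split => //.
rewrite mulmxA refl_between //; last by rewrite eq_sym.
  exact: refl_fix.
by rewrite /unit_sphere -/(dot y y) -/(dot x x) in xx yy *; rewrite xx yy.
Qed.
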